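(* Let $\Omega\subset\mathbb{R}^n$, let $k$ be a kernel on $\Omega$ satisfying the standing assumptions in the context, and let $u\in H_k(\Omega)$. Apply the gradient Hermite–Birkhoff $f$-greedy algorithm (described in the context) to $u$ with index set $\mathcal J:=\{1,\dots,n\}$, producing selected pairs $(x_1,\ell_1),(x_2,\ell_2),\dots$ and errors $e_0,e_1,\dots$. Then, for every $m\ge 1$, \[ \min_{m+1\le i\le 2m}\ \|\nabla e_i\|_{L^\infty(\Omega)} \ \le\ \sqrt{n}\, m^{-1/2}\, \|e_{m+1}\|_{H_k(\Omega)} \left[\ \prod_{i=m+1}^{2m} P_i(x_{i+1},\ell_{i+1})\ \right]^{1/m}. \]
   Context: $k:\Omega\times\Omega\to\mathbb{R}$ is a symmetric positive definite kernel with reproducing kernel Hilbert space $H_k(\Omega)$, $k\in C^2(\Omega\times\Omega)$, and for every $x\in\Omega$ and $\ell\in\mathcal J$ the function $\partial^{(2)}_\ell k(\cdot,x)$ (the $\ell$-th partial derivative of $k$ in its second argument) lies in $H_k(\Omega)$ and satisfies the derivative reproducing property $\partial_\ell f(x)=\langle f,\partial_\ell^{(2)}k(\cdot,x)\rangle_{H_k(\Omega)}$ for all $f\in H_k(\Omega)$. For a finite selection $\{(x_i,\ell_i)\}_{i=1}^m\subset\Omega\times\mathcal J$ let $V_m:=\operatorname{span}\{\partial^{(2)}_{\ell_i}k(\cdot,x_i): i=1,\dots,m\}$ ($V_0=\{0\}$), let $\Pi_m:H_k(\Omega)\to V_m$ be the orthogonal projector, $s_m:=\Pi_m u$ and $e_m:=u-s_m$.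 The $f$-greedy algorithm: starting from $m=0$ (so $s_0=0$), for each $m\ge 0$ choose $(x_{m+1},\ell_{m+1})\in\operatorname{argmax}_{x\in\Omega,\ \ell\in\mathcal J}|\partial_\ell e_m(x)|$ (a maximizer is assumed to exist) and set $s_{m+1}:=\Pi_{m+1}u$. The (derivative) power function is $P_m(x,\ell):=\|(I-\Pi_m)\partial^{(2)}_\ell k(\cdot,x)\|_{H_k(\Omega)}$ for $(x,\ell)\in\Omega\times\mathcal J$. Finally $\|\nabla e\|_{L^\infty(\Omega)}:=\sup_{x\in\Omega}\|\nabla e(x)\|_2$. *)

(* Defs.v *)
From HB Require Import structures.
From mathcomp Require Import all_boot all_order all_algebra.
From mathcomp Require Import all_classical all_reals all_analysis.
Set Implicit Arguments. Unset Strict Implicit. Unset Printing Implicit Defensive.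
Import Order.TTheory GRing.Theory Num.Theory.
Import numFieldNormedType.Exports.
Local Open Scope classical_set_scope.
Local Open Scope ring_scope.

Section Defs.
Variables (R : realType) (n : nat).
Notation pt := 'rV[R]_n.

(* l-th canonical basis vector of R^n (indices J = {1..n} are 'I_n, 0-based) *)
Definition evec (l : 'I_n) : pt := delta_mx 0 l.

Definition pd (f : pt -> R) (l : 'I_n) (x : pt) : R :=
  derive1 (fun t : R => f (x + t *: evec l)) 0.

Definition pd_exists (f : pt -> R) (l : 'I_n) (x : pt) : Prop :=
  derivable (fun t : R => f (x + t *: evec l)) 0 1.

(* Euclidean openness (via the equivalent sup-distance) *)
Definition open_set (Om : set pt) : Prop :=
  forall x, Om x -> exists2 r : R, 0 < r &
    forall y : pt, (forall i, `|y ord0 i - x ord0 i| < r) -> Om y.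

Definition cont2_on (Om : set pt) (g : pt -> pt -> R) : Prop :=
  forall x y, Om x -> Om y -> forall eps : R, 0 < eps ->
    exists2 del : R, 0 < del & forall x' y', Om x' -> Om y' ->
      (forall i, `|x' ord0 i - x ord0 i| < del) ->
      (forall i, `|y' ord0 i - y ord0 i| < del) ->
      `|g x' y' - g x y| < eps.

(* variable index of the 2n variables of (x,y): (false,l) = x_l, (true,l) = y_l *)
Definition pd2_exists (g : pt -> pt -> R) (a : bool * 'I_n) (x y : pt) : Prop :=
  if a.1 then pd_exists (g x) a.2 y else pd_exists (fun z => g z y) a.2 x.

Definition pd2 (g : pt -> pt -> R) (a : bool * 'I_n) : pt -> pt -> R :=
  fun x y => if a.1 then pd (g x) a.2 y else pd (fun z => g z y) a.2 x.

Definition C2_on (Om : set pt) (k : pt -> pt -> R) : Prop :=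
  cont2_on Om k /\
  (forall a, (forall x y, Om x -> Om y -> pd2_exists k a x y) /\
             cont2_on Om (pd2 k a)) /\
  (forall a b, (forall x y, Om x -> Om y -> pd2_exists (pd2 k a) b x y) /\
               cont2_on Om (pd2 (pd2 k a) b)).

Definition spd_kernel (Om : set pt) (k : pt -> pt -> R) : Prop :=
  (forall x y, Om x -> Om y -> k x y = k y x) /\
  (forall (N : nat) (xs : 'I_N -> pt) (c : 'I_N -> R),
     injective xs -> (forall i, Om (xs i)) -> (exists i, c i != 0) ->
     0 < \sum_(i < N) \sum_(j < N) c i * c j * k (xs i) (xs j)).

Variable H : lmodType R.

Definition hnorm (ip : H -> H -> R) (v : H) : R := Num.sqrt (ip v v).

(* H (with evaluation map ev and inner product ip) is the reproducing kernel
   Hilbert space H_k(Om) of k: a Hilbert space of functions on Om in which k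
   reproduces point evaluations (by Moore–Aronszajn this determines H_k(Om)). *)
Record is_RKHS (Om : set pt) (k : pt -> pt -> R) (ev : H -> pt -> R)
    (ip : H -> H -> R) : Prop := {
  ev_lin : forall (a : R) (f g : H) x, ev (a *: f + g) x = a * ev f x + ev g x;
  ev_inj : forall f : H, (forall x, Om x -> ev f x = 0) -> f = 0;
  ip_sym : forall f g, ip f g = ip g f;
  ip_linl : forall (a : R) (f g h : H), ip (a *: f + g) h = a * ip f h + ip g h;
  ip_pos : forall f : H, f != 0 -> 0 < ip f f;
  ip_complete : forall f : nat -> H,
    (forall eps : R, 0 < eps -> exists N, forall i j, (N <= i)%N -> (N <= j)%N ->
        hnorm ip (f i - f j) < eps) ->
    exists l : H, forall eps : R, 0 < eps -> exists N, forall i, (N <= i)%N ->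
        hnorm ip (f i - l) < eps;
  reproducing : forall x, Om x -> exists kx : H,
    (forall y, Om y -> ev kx y = k y x) /\ (forall f, ev f x = ip f kx)
}.

Definition deriv_reproducing (Om : set pt) (k : pt -> pt -> R)
    (ev : H -> pt -> R) (ip : H -> H -> R) (dk : pt -> 'I_n -> H) : Prop :=
  forall x l, Om x ->
    (forall y, Om y -> ev (dk x l) y = pd (k y) l x) /\
    (forall f, pd_exists (ev f) l x /\ pd (ev f) l x = ip f (dk x l)).

(* V_m = span{ dk x_i l_i : i = 1..m }, pts i = (x_i, l_i) for i >= 1 *)
Definition Vspace (dk : pt -> 'I_n -> H) (pts : nat -> pt * 'I_n) (m : nat)
  : set H :=
  [set w | exists c : 'I_m -> R,
     w = \sum_(i < m) c i *: dk (pts i.+1).1 (pts i.+1).2].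

Definition is_orth_proj (ip : H -> H -> R) (V : set H) (P : H -> H) : Prop :=
  forall v, V (P v) /\ forall w, V w -> ip (v - P v) w = 0.

Definition fgreedy (Om : set pt) (ev : H -> pt -> R) (u : H)
    (Pi : nat -> H -> H) (pts : nat -> pt * 'I_n) : Prop :=
  forall m, Om (pts m.+1).1 /\
    forall x l, Om x ->
      `|pd (ev (u - Pi m u)) l x| <=
      `|pd (ev (u - Pi m u)) (pts m.+1).2 (pts m.+1).1|.

Definition grad_sup (Om : set pt) (ev : H -> pt -> R) (e : H) : \bar R :=
  ereal_sup [set (Num.sqrt (\sum_(l < n) (pd (ev e) l x) ^+ 2))%:E | x in Om].

Definition power_fn (ip : H -> H -> R) (Pi : nat -> H -> H)
    (dk : pt -> 'I_n -> H) (m : nat) (x : pt) (l : 'I_n) : R :=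
  hnorm ip (dk x l - Pi m (dk x l)).

End Defs.

(* Main.v *)
Require Import Defs.
From HB Require Import structures.
From mathcomp Require Import all_boot all_order all_algebra.
From mathcomp Require Import all_classical all_reals all_analysis.
From mathcomp Require Import ring lra zify.
Import Order.TTheory GRing.Theory Num.Theory.
Local Open Scope classical_set_scope.
Local Open Scope ring_scope.

Lemma ip_step (R : realType) (H : lmodType R) (ip : H -> H -> R)
  (sym : forall f g, ip f g = ip g f)
  (lin : forall (a : R) (f g h : H), ip (a *: f + g) h = a * ip f h + ip g h)
  (pos : forall f : H, f != 0 -> 0 < ip f f)
  (V V' : set H) (Pv Pv' : H -> H) (u g : H) :
  is_orth_proj ip V Pv -> is_orth_proj ip V' Pv' ->
  (forall w, V w -> V' w) -> V' g ->
  (forall a w1 w2, V' w1 -> V' w2 -> V' (a *: w1 + w2)) ->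
  ip (u - Pv u) g ^+ 2 <= ip (g - Pv g) (g - Pv g) *
     (ip (u - Pv u) (u - Pv u) - ip (u - Pv' u) (u - Pv' u)) /\
  ip (u - Pv' u) (u - Pv' u) <= ip (u - Pv u) (u - Pv u).
Proof.
move=> hP hP' sVV Vg Vlin.
have ip0l h : ip 0 h = 0.
  have := lin (-1) h 0 h; rewrite scaleN1r addr0.
  have := lin 1 (- h) h h; rewrite scale1r addNr => ->.
  have := lin (-1) h 0 h; rewrite scaleN1r addr0 => -> ->.
  have := lin 1 0 0 h; rewrite scale1r addr0 mul1r => E.
  lra.
have ipDl f f' h : ip (f + f') h = ip f h + ip f' h.
  by rewrite -[f]scale1r lin mul1r scale1r.
have ipZl a f h : ip (a *: f) h = a * ip f h.
  by rewrite -[a *: f]addr0 lin ip0l addr0.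
have ipNl f h : ip (- f) h = - ip f h.
  by rewrite -scaleN1r ipZl mulN1r.
have ipBl f f' h : ip (f - f') h = ip f h - ip f' h by rewrite ipDl ipNl.
have ipDr f f' h : ip h (f + f') = ip h f + ip h f'.
  by rewrite sym ipDl (sym f) (sym f').
have ipZr a f h : ip h (a *: f) = a * ip h f by rewrite sym ipZl sym.
have ipBr f f' h : ip h (f - f') = ip h f - ip h f'.
  by rewrite sym ipBl (sym f) (sym f').
have ip0r h : ip h 0 = 0 by rewrite sym ip0l.
have ipge0 f : 0 <= ip f f.
  by case: (eqVneq f 0) => [->|/pos/ltW //]; rewrite ip0l.
have V0 : V' 0.
  by have := Vlin (-1) g g Vg Vg; rewrite scaleN1r addNr.
have Vsub w1 w2 : V' w1 -> V' w2 -> V' (w1 - w2).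
  move=> h1 h2; rewrite -[w1]scale1r -[_ - _]addr0 -addrA -scaleN1r.
  by apply: (Vlin) => //; apply: (Vlin).
set e := u - Pv u; set e' := u - Pv' u; set w := g - Pv g.
have Vw : V' w by apply: (Vsub) => //; apply: (sVV); case: (hP g).
have etw : ip e g = ip e w.
  by rewrite /w ipBr (proj2 (hP u) (Pv g)) ?subr0 //; case: (hP g).
have key c : ip e' e' <= ip e e - 2 * c * ip e w + c ^+ 2 * ip w w.
  set z := Pv u + c *: w.
  have Vz : V' z by rewrite /z addrC; apply: (Vlin) => //; apply: (sVV); case: (hP u).
  set y := Pv' u - z.
  have Vy : V' y by apply: (Vsub) => //; case: (hP' u).
  have E1 : u - z = e' + y by rewrite /e' /y addrA subrK.
  have E2 : u - z = e - c *: w by rewrite /z /e opprD addrA.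
  have oy : ip e' y = 0 by apply: (proj2 (hP' u)).
  have : ip (u - z) (u - z) = ip e' e' + ip y y.
    by rewrite E1 (ipDl e' y) (ipDr e' y e') (ipDr e' y y) oy (sym y e') oy add0r addr0.
  rewrite E2 (ipBl e (c *: w)) (ipBr e (c*:w) e) (ipBr e (c*:w) (c*:w)) (ipZr c w e) (ipZl c w e) (ipZl c w (c*:w)) (ipZr c w w) (sym w e) => E.
  have := ipge0 y; lra.
split; last by have := key 0; rewrite mulr0 mul0r expr0n /= mul0r subr0 addr0.
rewrite etw.
case: (eqVneq w 0) => [w0|wn0].
  by rewrite w0 ip0r ip0l expr0n /= mul0r.
have qp := pos _ wn0.
have h := key (ip e w / ip w w).
move: h qp; move: (ip e w) (ip w w) => t q h qp.
move: h; set s := t / q => h.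
have ht : t = s * q by rewrite /s divfK // gt_eqF.
have h2 := ler_wpM2l (ltW qp) h.
move: h2; rewrite ht; clearbody s => h2.
nra.
Qed.

Lemma V_lin (R : realType) (n : nat) (H : lmodType R) (dk : 'rV[R]_n -> 'I_n -> H)
  (pts : nat -> 'rV[R]_n * 'I_n) (m : nat) (a : R) (w1 w2 : H) :
  Vspace dk pts m w1 -> Vspace dk pts m w2 -> Vspace dk pts m (a *: w1 + w2).
Proof.
move=> [c1 ->] [c2 ->]; exists (fun j => a * c1 j + c2 j).
rewrite scaler_sumr -big_split /=; apply: eq_bigr => j _.
by rewrite scalerDl scalerA.
Qed.

Lemma V_mono (R : realType) (n : nat) (H : lmodType R) (dk : 'rV[R]_n -> 'I_n -> H)
  (pts : nat -> 'rV[R]_n * 'I_n) (m : nat) (w : H) :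
  Vspace dk pts m w -> Vspace dk pts m.+1 w.
Proof.
move=> [c ->].
exists (fun j : 'I_m.+1 => if (insub (val j) : option 'I_m) is Some j' then c j' else 0).
rewrite big_ord_recr /= insubF ?ltnn // scale0r addr0; apply: eq_bigr => j _.
by rewrite valK.
Qed.

Lemma V_new (R : realType) (n : nat) (H : lmodType R) (dk : 'rV[R]_n -> 'I_n -> H)
  (pts : nat -> 'rV[R]_n * 'I_n) (m : nat) :
  Vspace dk pts m.+1 (dk (pts m.+1).1 (pts m.+1).2).
Proof.
exists (fun j : 'I_m.+1 => if val j == m then 1 else 0).
rewrite big_ord_recr /= eqxx scale1r big1 ?add0r // => j _.
by rewrite (ltn_eqF (ltn_ord j)) scale0r.
Qed.

Lemma argmin_nat (R : realType) (f : nat -> R) (lo k : nat) :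
  exists j, (lo <= j < lo + k.+1)%N /\
    forall i, (lo <= i < lo + k.+1)%N -> f j <= f i.
Proof.
elim: k => [|k [j [hj hmin]]].
  exists lo; rewrite addn1 leqnn ltnSn; split => // i.
  by rewrite ltnS -eqn_leq => /eqP ->.
case: (leP (f j) (f (lo + k.+1))) => hle.
  exists j; split; first by lia.
  move=> i hi.
  have [->|hi2] : i = (lo + k.+1)%N \/ (lo <= i < lo + k.+1)%N by lia.
    by [].
  by apply: hmin.
exists (lo + k.+1)%N; split; first by lia.
move=> i hi.
have [->|hi2] : i = (lo + k.+1)%N \/ (lo <= i < lo + k.+1)%N by lia.
  by [].
by apply: le_trans (ltW hle) _; apply: hmin.
Qed.

Lemma AGM_ord (R : realType) m (E : 'I_m -> R) : (forall i, 0 <= E i) ->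
  \prod_i E i <= ((\sum_i E i) / m%:R) ^+ m.
Proof.
move=> h; have := leif_AGM (A := predT) (E := E) (fun i _ => h i).
by case=> + _; rewrite cardT size_enum_ord.
Qed.

Lemma ip_nonneg (R : realType) (H : lmodType R) (ip : H -> H -> R)
  (lin : forall (a : R) (f g h : H), ip (a *: f + g) h = a * ip f h + ip g h)
  (pos : forall f : H, f != 0 -> 0 < ip f f) f : 0 <= ip f f.
Proof.
case: (eqVneq f 0) => [->|/pos/ltW //].
have := lin (-1) 0 0 0; rewrite scaleN1r oppr0 addr0 mulN1r => E.
have : ip 0 0 = 0 by lra.
by move=> ->.
Qed.

Theorem theorem1 (R : realType) (n : nat) (Om : set 'rV[R]_n)
  (k : 'rV[R]_n -> 'rV[R]_n -> R) (H : lmodType R) (ev : H -> 'rV[R]_n -> R)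
  (ip : H -> H -> R) (dk : 'rV[R]_n -> 'I_n -> H) (u : H)
  (Pi : nat -> H -> H) (pts : nat -> 'rV[R]_n * 'I_n) :
  open_set Om ->
  spd_kernel Om k ->
  C2_on Om k ->
  is_RKHS Om k ev ip ->
  deriv_reproducing Om k ev ip dk ->
  (forall m, is_orth_proj ip (Vspace dk pts m) (Pi m)) ->
  fgreedy Om ev u Pi pts ->
  forall m : nat, (1 <= m)%N ->
    (\big[Order.min/+oo%E]_(m.+1 <= i < m.*2.+1) grad_sup Om ev (u - Pi i u)
     <= (Num.sqrt (n%:R) * (Num.sqrt (m%:R))^-1 * hnorm ip (u - Pi m.+1 u)
         * (\prod_(m.+1 <= i < m.*2.+1)
               power_fn ip Pi dk i (pts i.+1).1 (pts i.+1).2) `^ (m%:R^-1))%:E)%E.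
Proof.
move=> _ _ _ hR hdr hPi hfg m hm.
case: hR => _ _ sym lin pos _ _.
have ipge0 := @ip_nonneg _ _ _ lin pos.
pose a i := ip (u - Pi i u) (u - Pi i u).
pose g i := dk (pts i.+1).1 (pts i.+1).2.
pose q i := ip (g i - Pi i (g i)) (g i - Pi i (g i)).
pose r i := `|pd (ev (u - Pi i u)) (pts i.+1).2 (pts i.+1).1|.
have F1 i : r i ^+ 2 <= q i * (a i - a i.+1) /\ a i.+1 <= a i.
  have [hx _] := hfg i.
  have [_ hd] := hdr _ (pts i.+1).2 hx.
  have [_ E] := hd (u - Pi i u).
  rewrite /r E real_normK ?num_real //.
  apply: (@ip_step _ _ _ sym lin pos _ _ _ _ _ _ (hPi i) (hPi i.+1)).
  - by move=> w; apply: V_mono.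
  - by apply: (@V_new _ _ _ dk pts i).
  - by move=> c w1 w2; apply: V_lin.
have F2 i : (grad_sup Om ev (u - Pi i u) <= (Num.sqrt n%:R * r i)%:E)%E.
  apply: ge_ereal_sup => _ [x Ox <-]; rewrite lee_fin.
  rewrite -[X in _ * X](@ger0_norm _ (r i)) ?normr_ge0 // -sqrtr_sqr.
  rewrite -sqrtrM ?ler0n // ler_sqrt; last by rewrite mulr_ge0 ?ler0n ?sqr_ge0.
  apply: le_trans (_ : \sum_(l < n) r i ^+ 2 <= _).
    apply: ler_sum => l _.
    rewrite -real_normK ?num_real // lerXn2r // ?nnegrE ?normr_ge0 //.
    exact: (proj2 (hfg i)).
  by rewrite sumr_const card_ord mulr_natl.
have [j [hj hmin]] := @argmin_nat R r m.+1 m.-1.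
have Em : (m.+1 + m.-1.+1 = m.*2.+1)%N by lia.
rewrite Em in hj hmin.
apply: (bigmin_inf_seq _ j) => //; first by rewrite mem_index_iota.
apply: le_trans (F2 j) _; rewrite lee_fin.
rewrite -!mulrA; apply: ler_wpM2l; first exact: sqrtr_ge0.
have -> : hnorm ip (u - Pi m.+1 u) = Num.sqrt (a m.+1) by [].
have -> : \prod_(m.+1 <= i < m.*2.+1) power_fn ip Pi dk i (pts i.+1).1 (pts i.+1).2
   = \prod_(m.+1 <= i < m.*2.+1) Num.sqrt (q i) by [].
set P := \prod_(m.+1 <= i < m.*2.+1) Num.sqrt (q i).
have P0 : 0 <= P by apply: prodr_ge0 => i _; apply: sqrtr_ge0.
have hP : (P `^ m%:R^-1) ^+ m = P.
  rewrite -powR_mulrn ?powR_ge0 // -powRrM mulVf ?pnatr_eq0 -?lt0n //.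
  by rewrite powRr1.
have hP2 : P ^+ 2 = \prod_(m.+1 <= i < m.*2.+1) q i.
  by rewrite /P -prodrXl; apply: eq_bigr => i _; rewrite sqr_sqrtr // ipge0.
set C := _ * (_ * _).
have C0 : 0 <= C.
  by rewrite /C !mulr_ge0 ?invr_ge0 ?sqrtr_ge0 ?powR_ge0.
have r0 : 0 <= r j by apply: normr_ge0.
have EC : (C ^+ 2) ^+ m = (a m.+1 / m%:R) ^+ m * \prod_(m.+1 <= i < m.*2.+1) q i.
  have C2 : C ^+ 2 = (a m.+1 / m%:R) * (P `^ m%:R^-1) ^+ 2.
    rewrite /C !exprMn exprVn !sqr_sqrtr ?ler0n ?ipge0 //.
    by rewrite mulrA [_^-1 * _]mulrC.
  by rewrite C2 exprMn -exprM mulnC exprM hP hP2.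
suff h : (r j ^+ 2) ^+ m <= (C ^+ 2) ^+ m.
  rewrite -(ler_pXn2r (n:=2)) ?nnegrE //.
  by rewrite -(ler_pXn2r hm) ?nnegrE ?exprn_ge0.
rewrite EC.
have cnv (F : nat -> R) : \prod_(m.+1 <= i < m.*2.+1) F i = \prod_(i < m) F (i + m.+1)%N.
  rewrite -{1}[m.+1]add0n big_addn.
  have -> : (m.*2.+1 - m.+1 = m)%N by lia.
  by rewrite big_mkord.
have cnvs (F : nat -> R) : \sum_(m.+1 <= i < m.*2.+1) F i = \sum_(i < m) F (i + m.+1)%N.
  rewrite -{1}[m.+1]add0n big_addn.
  have -> : (m.*2.+1 - m.+1 = m)%N by lia.
  by rewrite big_mkord.
apply: le_trans (_ : \prod_(m.+1 <= i < m.*2.+1) (q i * (a i - a i.+1)) <= _).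
  have -> : (r j ^+ 2) ^+ m = \prod_(m.+1 <= i < m.*2.+1) r j ^+ 2.
    rewrite prodr_const_nat; congr (_ ^+ _); lia.
  rewrite big_seq [X in _ <= X]big_seq; apply: ler_prod => i.
  rewrite mem_index_iota => hi.
  rewrite sqr_ge0 /=; apply: le_trans (proj1 (F1 i)).
  by rewrite lerXn2r ?nnegrE ?normr_ge0 //; apply: hmin.
rewrite big_split /= mulrC; apply: ler_wpM2r.
  by apply: prodr_ge0 => i _; apply: ipge0.
rewrite cnv.
have hA := @AGM_ord R m (fun i : 'I_m => a (i + m.+1)%N - a (i + m.+1).+1)
  (fun i => ltac:(rewrite subr_ge0; exact: (proj2 (F1 _)))).
apply: le_trans hA _.
rewrite lerXn2r ?nnegrE //.
- by rewrite divr_ge0 ?ler0n ?sumr_ge0 // => i _; rewrite subr_ge0; apply: (proj2 (F1 _)).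
- by rewrite divr_ge0 ?ler0n ?ipge0.
rewrite ler_pM2r ?invr_gt0 ?ltr0n // -(cnvs (fun i => a i - a i.+1)).
rewrite (telescope_sumr_eq (fun k => - a k)).
- by rewrite opprK addrC lerBlDr lerDl ipge0.
- by lia.
- by move=> i _; rewrite opprK addrC.
Qed.
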